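(* Let $\{q_x,\rho_x\}_{x=1}^N$ be an ensemble of density operators on a finite-dimensional Hilbert space with probabilities $q_x$, and let $K$ be its symmetry operator, i.e. $K$ is Hermitian and there exist $r_x\ge0$, density operators $\sigma_x$ and a POVM $\{M_x\}$ with $K=q_x\rho_x+r_x\sigma_x$ and $r_x\mathrm{tr}[M_x\sigma_x]=0$ for all $x$. Then $$P_{\mathrm{guess}}=\frac1N+R,\qquad R=\frac1N\sum_{x=1}^N\|K-q_x\rho_x\|_1 .$$
   Context: $P_{\mathrm{guess}}=\max_{\{M_x\}}\sum_x q_x\mathrm{tr}[M_x\rho_x]$, the maximum over POVMs (families of positive semidefinite operators summing to the identity). $\|A\|_1=\mathrm{tr}|A|$ is the trace norm. *)

(* Defs.v *)
From mathcomp Require Import all_boot all_order all_algebra.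
From mathcomp Require Import complex.
From mathcomp Require Import boolp classical_sets reals.
Set Implicit Arguments. Unset Strict Implicit. Unset Printing Implicit Defensive.
Import Order.TTheory GRing.Theory Num.Theory.
Local Open Scope ring_scope.

Section QDefs.
Variable R : realType.
Local Notation C := R[i].

Definition adjm (m n : nat) (A : 'M[C]_(m, n)) : 'M[C]_(n, m) :=
  (map_mx (@conjc R) A)^T.

Definition hermitian (d : nat) (A : 'M[C]_d) : Prop := adjm A = A.

Definition psd (d : nat) (A : 'M[C]_d) : Prop :=
  hermitian A /\ forall v : 'cV[C]_d, 0 <= (adjm v *m A *m v) 0 0.

Definition density (d : nat) (A : 'M[C]_d) : Prop := psd A /\ \tr A = 1.

Definition POVM (d N : nat) (M : 'I_N -> 'M[C]_d) : Prop :=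
  (forall x, psd (M x)) /\ \sum_(x < N) M x = 1%:M.

Definition probvec (N : nat) (q : 'I_N -> R) : Prop :=
  (forall x, 0 <= q x) /\ \sum_(x < N) q x = 1.

(* the (unique) positive semidefinite square root of A (0 if none exists) *)
Definition sqrtm (d : nat) (A : 'M[C]_d) : 'M[C]_d :=
  xget 0 [set B | psd B /\ B *m B = A].

Definition trnorm (d : nat) (A : 'M[C]_d) : R :=
  complex.Re (\tr (sqrtm (adjm A *m A))).

Definition succ_prob (d N : nat) (q : 'I_N -> R) (rho : 'I_N -> 'M[C]_d)
  (M : 'I_N -> 'M[C]_d) : R :=
  \sum_(x < N) q x * complex.Re (\tr (M x *m rho x)).

Definition Pguess (d N : nat) (q : 'I_N -> R) (rho : 'I_N -> 'M[C]_d) : R :=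
  sup [set p | exists M : 'I_N -> 'M[C]_d, POVM M /\ p = succ_prob q rho M].

Definition symmetry_operator (d N : nat) (q : 'I_N -> R)
  (rho : 'I_N -> 'M[C]_d) (K : 'M[C]_d) : Prop :=
  hermitian K /\
  exists (r : 'I_N -> R) (sigma : 'I_N -> 'M[C]_d) (M : 'I_N -> 'M[C]_d),
    POVM M /\
    forall x, [/\ 0 <= r x, density (sigma x),
      K = (q x)%:C%C *: rho x + (r x)%:C%C *: sigma x &
      (r x)%:C%C * \tr (M x *m sigma x) = 0].

End QDefs.

(* Main.v *)
Require Import Defs.
From mathcomp Require Import all_boot all_order all_algebra.
From mathcomp Require Import complex.
From mathcomp Require spectral sesquilinear.
From mathcomp Require Import boolp classical_sets reals.
Import Order.TTheory GRing.Theory Num.Theory.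
Local Open Scope ring_scope.
Local Open Scope classical_set_scope.
Set Implicit Arguments. Unset Strict Implicit. Unset Printing Implicit Defensive.
Section S.
Variable R : realType.
Local Notation C := R[i].

Lemma adjmK m n (A : 'M[C]_(m, n)) : adjm (adjm A) = A.
Proof. by apply/matrixP => i j; rewrite /adjm !mxE conjcK. Qed.

Lemma adjmM m n p (A : 'M[C]_(m, n)) (B : 'M[C]_(n, p)) :
  adjm (A *m B) = adjm B *m adjm A.
Proof. by rewrite /adjm (map_mxM (@Num.conj C)) trmx_mul. Qed.

Lemma adjmD m n (A B : 'M[C]_(m, n)) : adjm (A + B) = adjm A + adjm B.
Proof. by rewrite /adjm (map_mxD (@Num.conj C)) linearD. Qed.

Lemma adjmN m n (A : 'M[C]_(m, n)) : adjm (- A) = - adjm A.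
Proof. by rewrite /adjm (map_mxN (@Num.conj C)) linearN. Qed.

Lemma adjmZ m n (c : C) (A : 'M[C]_(m, n)) : adjm (c *: A) = c^*%C *: adjm A.
Proof. by apply/matrixP => i j; rewrite /adjm !mxE rmorphM. Qed.

Lemma adjm_t m n (A : 'M[C]_(m, n)) : adjm A = map_mx (@Num.conj C) (A^T).
Proof. by rewrite /adjm map_trmx. Qed.

Lemma adjm1 n : adjm (1%:M : 'M[C]_n) = 1%:M.
Proof. by rewrite /adjm (map_mx1 (@Num.conj C)) trmx1. Qed.

Lemma adj_self_ge0 m (w : 'cV[C]_m) : 0 <= (adjm w *m w) 0 0.
Proof.
rewrite /adjm !mxE; apply: sumr_ge0 => i _; rewrite !mxE mulrC.
exact: mulcJ_ge0.
Qed.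

Lemma psd_sandwich n (D X : 'M[C]_n) : Defs.hermitian D -> psd X -> psd (D *m X *m D).
Proof.
move=> hD [hX pX]; split.
  by rewrite /Defs.hermitian !adjmM hD hX mulmxA.
move=> v; have := pX (D *m v).
by rewrite adjmM hD !mulmxA.
Qed.

Lemma psd_sq n (D : 'M[C]_n) : Defs.hermitian D -> psd (D *m D).
Proof.
move=> hD; split; first by rewrite /Defs.hermitian adjmM hD.
move=> v; have := adj_self_ge0 (D *m v).
by rewrite adjmM hD !mulmxA.
Qed.

Lemma psd_row n (A : 'M[C]_n) (u : 'rV[C]_n) : psd A -> 0 <= (u *m A *m adjm u) 0 0.
Proof. by move=> [_ pA]; have := pA (adjm u); rewrite adjmK. Qed.

Lemma diag_entry n (U A : 'M[C]_n) i :
  (U *m A *m adjm U) i i = (row i U *m A *m adjm (row i U)) 0 0.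
Proof.
rewrite /adjm !mxE; apply: eq_bigr => k _; rewrite !mxE; congr (_ * _).
by apply: eq_bigr => l _; rewrite !mxE.
Qed.

Lemma spec n (A : 'M[C]_n) : Defs.hermitian A ->
  exists U (d : 'rV[C]_n), U *m adjm U = 1%:M /\ adjm U *m U = 1%:M /\
    A = adjm U *m diag_mx d *m U.
Proof.
move=> hA.
have nA : A \is spectral.normalmx.
  by apply/eqP; rewrite -!adjm_t hA.
have Ae := spectral.orthomx_spectralP nA.
have uP := spectral.spectral_unitarymx A.
have iP := spectral.invmx_unitary uP.
have uP' := spectral.unitarymxP uP.
exists (spectral.spectralmx A), (spectral.spectral_diag A).
rewrite adjm_t; split; first exact: uP'.
split; last by rewrite -iP.
by rewrite -iP mulVmx // spectral.unitarymx_unit.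
Qed.
Lemma tr_diag_mul n (d : 'rV[C]_n) X : \tr (diag_mx d *m X) = \sum_i d 0 i * X i i.
Proof. by rewrite /mxtrace; apply: eq_bigr => i _; rewrite mul_diag_mx mxE. Qed.

Lemma spec_diag n (A U : 'M[C]_n) d : U *m adjm U = 1%:M ->
  A = adjm U *m diag_mx d *m U -> forall i, d 0 i = (U *m A *m adjm U) i i.
Proof.
move=> uU -> i.
rewrite !mulmxA uU mul1mx -mulmxA uU mulmx1 mxE eqxx mulr1n //.
Qed.

Lemma tr_psd_ge0 n (A B : 'M[C]_n) : psd A -> psd B -> 0 <= \tr (A *m B).
Proof.
move=> pA pB.
have [U [d [uU [Uu Ae]]]] := spec pA.1.
have dE := spec_diag uU Ae.
rewrite Ae -!mulmxA mxtrace_mulC -!mulmxA [X in diag_mx d *m X]mulmxA.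
rewrite tr_diag_mul; apply: sumr_ge0 => i _.
apply: mulr_ge0; first by rewrite dE diag_entry; exact: psd_row.
by rewrite diag_entry; exact: psd_row.
Qed.

Lemma tr_psd_eq0 n (A : 'M[C]_n) : psd A -> \tr A = 0 -> A = 0.
Proof.
move=> pA tA.
have [U [d [uU [Uu Ae]]]] := spec pA.1.
have dE := spec_diag uU Ae.
have d0 : forall i, 0 <= d 0 i by move=> i; rewrite dE diag_entry; exact: psd_row.
have : \tr (diag_mx d) = 0.
  by rewrite -tA Ae mxtrace_mulC mulmxA uU mul1mx.
rewrite mxtrace_diag => /eqP; rewrite psumr_eq0; last by move=> i _; exact: d0.
move=> /allP dz.
rewrite Ae; have -> : d = 0.
  apply/matrixP => i j; rewrite ord1 mxE.
  have := dz j (mem_index_enum _).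
  by move/eqP.
by rewrite linear0 mulmx0 mul0mx.
Qed.
Lemma adjm_mul_eq0 m n (A : 'M[C]_(m, n)) : adjm A *m A = 0 -> A = 0.
Proof.
move=> H; apply/matrixP => i j.
have := congr1 (fun M : 'M[C]_n => M j j) H; rewrite !mxE => /eqP.
rewrite psumr_eq0; last by move=> k _; rewrite /adjm !mxE mulrC mulcJ_ge0.
move=> /allP /(_ i (mem_index_enum _)).
by rewrite /adjm !mxE mulf_eq0 conjc_eq0 orbb => /eqP.
Qed.

Lemma psd_sqrt_uniq n (B Cm : 'M[C]_n) : psd B -> psd Cm ->
  B *m B = Cm *m Cm -> B = Cm.
Proof.
move=> pB pC H.
set D := B - Cm.
have hD : Defs.hermitian D.
  by rewrite /Defs.hermitian /D adjmD adjmN pB.1 pC.1.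
have hBD : B *m D = - (D *m Cm).
  apply/eqP; rewrite -subr_eq0 opprK /D mulmxBr mulmxBl H.
  by rewrite addrA subrK subrr.
have t1 := tr_psd_ge0 pB (psd_sq hD).
have t2 := tr_psd_ge0 pC (psd_sq hD).
have t12 : \tr (B *m (D *m D)) = - \tr (Cm *m (D *m D)).
  rewrite mulmxA hBD mulNmx linearN /=; congr (- _).
  by rewrite -mulmxA mxtrace_mulC -mulmxA.
have t10 : \tr (B *m (D *m D)) = 0.
  by apply/eqP; rewrite eq_le t1 andbT t12 oppr_le0.
have t20 : \tr (Cm *m (D *m D)) = 0.
  by apply/eqP; rewrite -oppr_eq0 -t12 t10.
have trS : forall X : 'M[C]_n, \tr (D *m X *m D) = \tr (X *m (D *m D)).
  by move=> X; rewrite [in LHS]mxtrace_mulC [in LHS]mulmxA [in LHS]mxtrace_mulC.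
have DBD : D *m B *m D = 0 by apply: tr_psd_eq0; [exact: psd_sandwich | rewrite trS].
have DCD : D *m Cm *m D = 0 by apply: tr_psd_eq0; [exact: psd_sandwich | rewrite trS].
have D3' : D *m (B - Cm) *m D = 0.
  by rewrite (mulmxBr D B Cm) mulmxBl DBD DCD subrr.
have D3 : D *m D *m D = 0 := D3'.
have D2 : D *m D = 0.
  apply: adjm_mul_eq0; rewrite adjmM hD -mulmxA.
  by rewrite [D *m (D *m D)]mulmxA D3 mulmx0.
have D0 : D = 0 by apply: adjm_mul_eq0; rewrite hD.
by apply/eqP; rewrite -subr_eq0 -/D D0.
Qed.
Lemma psd_scale n (r : R) (s : 'M[C]_n) : 0 <= r -> psd s -> psd (r%:C%C *: s).
Proof.
move=> r0 [hs ps]; split.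
  by rewrite /Defs.hermitian adjmZ conjc_real hs.
move=> v; rewrite -scalemxAr -scalemxAl mxE.
by apply: mulr_ge0; [rewrite ler0c | exact: ps].
Qed.

Lemma trnorm_scaled n (r : R) (s : 'M[C]_n) : 0 <= r -> density s ->
  trnorm (r%:C%C *: s) = r.
Proof.
move=> r0 [ps ts].
have pA := psd_scale r0 ps.
rewrite /trnorm /sqrtm pA.1.
have := @xgetI _ 0 [set B : 'M[C]_n | psd B /\ B *m B = r%:C%C *: s *m (r%:C%C *: s)]
   (r%:C%C *: s) (conj pA erefl).
move=> [pB HB]; rewrite (psd_sqrt_uniq pB pA HB).
by rewrite linearZ /= ts mulr1.
Qed.
Lemma ReD (x y : C) : complex.Re (x + y) = complex.Re x + complex.Re y. Proof. by case: x => a b; case: y => c e. Qed.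
Lemma ReN (x : C) : complex.Re (- x) = - complex.Re x. Proof. by case: x => a b. Qed.
Lemma ReMr (a : R) (z : C) : complex.Re (a%:C%C * z) = a * complex.Re z.
Proof. by case: z => c e /=; rewrite mul0r subr0. Qed.
Lemma Re_sum N (F : 'I_N -> C) : complex.Re (\sum_i F i) = \sum_i complex.Re (F i).
Proof. by apply: (big_morph _ ReD). Qed.
Lemma Re_ge0 (z : C) : 0 <= z -> 0 <= complex.Re z.
Proof. by rewrite lecE => /andP[]. Qed.
End S.

Theorem proposition2 (R : realType) (d N : nat) (q : 'I_N -> R)
  (rho : 'I_N -> 'M[R[i]]_d) (K : 'M[R[i]]_d) :
  probvec q ->
  (forall x, density (rho x)) ->
  symmetry_operator q rho K ->
  Pguess q rho =
    N%:R^-1 + N%:R^-1 * \sum_(x < N) trnorm (K - (q x)%:C%C *: rho x).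
Proof.
move=> [q0 qs] hrho [hK [r [sig [M [PM HM]]]]].
set t := complex.Re (\tr K).
have Kx : forall x, K - (q x)%:C%C *: rho x = (r x)%:C%C *: sig x.
  by move=> x; have [_ _ -> _] := HM x; rewrite addrC addKr.
have tx : forall x, t = q x + r x.
  move=> x; have [_ [_ ts] Ke _] := HM x.
  have [_ tr1] := hrho x.
  by rewrite /t Ke linearD !linearZ /= ts tr1 !mulr1 ReD.
have succE : forall M', POVM M' -> succ_prob q rho M' =
    t - \sum_x r x * complex.Re (\tr (M' x *m sig x)).
  move=> M' [_ sM'].
  have -> : t = \sum_x complex.Re (\tr (M' x *m K)).
    by rewrite -Re_sum -linear_sum /= -mulmx_suml sM' mul1mx.
  rewrite /succ_prob -sumrB; apply: eq_bigr => x _.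
  have [_ _ Ke _] := HM x.
  by rewrite {1}Ke mulmxDr linearD /= -!scalemxAr !linearZ /= ReD !ReMr addrK.
have ge0 : forall M', POVM M' -> forall x, 0 <= r x * complex.Re (\tr (M' x *m sig x)).
  move=> M' [pM' _] x; have [r0 [ps _] _ _] := HM x.
  by apply: mulr_ge0 => //; apply: Re_ge0; apply: tr_psd_ge0.
have Pt : Pguess q rho = t.
  set S := [set p | exists M0 : 'I_N -> 'M[R[i]]_d, POVM M0 /\ p = succ_prob q rho M0].
  have St : S t.
    exists M; split => //; rewrite succE // big1 ?subr0 // => x _.
    have [_ _ _ e] := HM x.
    by rewrite -ReMr e.
  have ub : ubound S t.
    move=> p [M0 [PM0 ->]]; rewrite succE //.
    by rewrite lerBlDr lerDl; apply: sumr_ge0 => x _; apply: ge0.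
  rewrite /Pguess -/S; apply/le_anti/andP; split.
    by apply: ge_sup => //; exists t.
  by apply: sup_upper_bound => //; split; exists t.
rewrite Pt.
rewrite (eq_bigr (fun x => r x)); last first.
  move=> x _; rewrite Kx; have [r0 ds _ _] := HM x.
  exact: trnorm_scaled.
have sumt : N%:R * t = 1 + \sum_x r x.
  have : \sum_(x < N) t = \sum_x (q x + r x) by apply: eq_bigr => x _; exact: tx.
  by rewrite sumr_const card_ord big_split /= qs mulr_natl.
have rpos : 0 < 1 + \sum_x r x.
  apply: ltr_pwDl => //; apply: sumr_ge0 => x _.
  by have [r0 _ _ _] := HM x.
have N0 : N%:R != 0 :> R.
  apply/eqP => N0; move: rpos; rewrite -sumt N0 mul0r ltxx //.
by apply: (mulfI N0); rewrite sumt mulrDr mulrA mulfV // mul1r.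
Qed.
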